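(* For any integer $t\geq 2$, there exist a connected graph $G$ and a function $g:V(G_1)\to V(G_2)$ such that $Dist(G)=t=Dist(F_G)$.
   Context: $Dist(H)$ is the least $t$ such that $H$ has a labeling $V(H)\to\{1,\dots,t\}$ preserved by no non-identity automorphism of $H$. Functigraph: for disjoint copies $G_1,G_2$ of a connected graph $G$ and a function $g:V(G_1)\to V(G_2)$, $F_G$ has vertex set $V(G_1)\cup V(G_2)$ and edge set $E(G_1)\cup E(G_2)\cup\{uv: u\in V(G_1),\ g(u)=v\}$. *)

(* Defs.v *)
From mathcomp Require Import all_boot all_fingroup.
Set Implicit Arguments. Unset Strict Implicit. Unset Printing Implicit Defensive.

Definition simple_graph (V : finType) (e : rel V) : Prop :=
  symmetric e /\ irreflexive e.

Definition connected_graph (V : finType) (e : rel V) : Prop :=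
  0 < #|V| /\ forall x y : V, connect e x y.

Definition is_automorphism (V : finType) (e : rel V) (f : {perm V}) : Prop :=
  forall x y : V, e (f x) (f y) = e x y.

(* A labeling with t labels (labels 'I_t, i.e. t values, standing for {1..t})
   is distinguishing if no non-identity automorphism preserves it. *)
Definition distinguishing (V : finType) (e : rel V) (t : nat) (c : V -> 'I_t) : Prop :=
  forall f : {perm V}, is_automorphism e f -> (forall x, c (f x) = c x) -> f = 1%g.

Definition has_dist_labeling (V : finType) (e : rel V) (t : nat) : Prop :=
  exists c : V -> 'I_t, distinguishing e c.

Definition Dist_eq (V : finType) (e : rel V) (t : nat) : Prop :=
  has_dist_labeling e t /\ forall s, has_dist_labeling e s -> t <= s.

(* Functigraph F_G: vertices V(G_1) + V(G_2) (inl = G_1, inr = G_2), edges of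
   both copies plus u v for u in G_1 with g u = v. *)
Definition functigraph (V : finType) (e : rel V) (g : V -> V) : rel (V + V) :=
  fun a b => match a, b with
  | inl x, inl y => e x y
  | inr x, inr y => e x y
  | inl x, inr y => g x == y
  | inr y, inl x => g x == y
  end.

(* Main.v *)
Require Import Defs.
From mathcomp Require Import all_boot all_fingroup.
Set Implicit Arguments. Unset Strict Implicit. Unset Printing Implicit Defensive.

Lemma tperm_aut (V : finType) (e : rel V) (x y : V) :
  (forall z, z != x -> z != y -> e x z = e y z /\ e z x = e z y) ->
  e x y = e y x -> e x x = e y y ->
  is_automorphism e (tperm x y).
Proof.
move=> tw hxy hxx a b.
case: tpermP => [->|->|ax ay]; case: tpermP => [->|->|bx by_] //;
  try by rewrite ?hxx ?hxy.
- by have [h1 h2] := tw b (introN eqP bx) (introN eqP by_); rewrite ?h1 ?h2.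
- by have [h1 h2] := tw b (introN eqP bx) (introN eqP by_); rewrite ?h1 ?h2.
- by have [h1 h2] := tw a (introN eqP ax) (introN eqP ay); rewrite ?h1 ?h2.
- by have [h1 h2] := tw a (introN eqP ax) (introN eqP ay); rewrite ?h1 ?h2.
Qed.

Lemma lower_bound (V : finType) (e : rel V) (W : finType) (h : W -> V) s :
  injective h ->
  (forall i j, i != j -> is_automorphism e (tperm (h i) (h j))) ->
  has_dist_labeling e s -> #|W| <= s.
Proof.
move=> hinj haut [c hc].
have [/injectiveP inj|/injectivePn [i [j ij eqc]]] := boolP (injectiveb (fun i => c (h i))).
  by have := @leq_card _ _ (fun i => c (h i)) inj; rewrite card_ord.
have := hc _ (haut i j ij).
have H : forall x, c (tperm (h i) (h j) x) = c x.
  by move=> x; case: tpermP => [->|->|] //.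
move/(_ H)/permP/(_ (h i)); rewrite tpermL perm1 => /hinj /eqP.
by rewrite eq_sym (negbTE ij).
Qed.

Theorem lemma2p6 : forall t : nat, 2 <= t ->
  exists (V : finType) (e : rel V) (g : V -> V),
    simple_graph e /\ connected_graph e /\
    Dist_eq e t /\ Dist_eq (functigraph e g) t.
Proof.
case=> [|[|n]] // _.
pose e := fun x y : 'I_n.+2 => x != y.
pose g := fun _ : 'I_n.+2 => (ord0 : 'I_n.+2).
exists 'I_n.+2, e, g.
have i1P : 1 < n.+2 by [].
pose i1 := Ordinal i1P.
split; first by split; [move=> x y; rewrite /e eq_sym | move=> x; rewrite /e eqxx].
split.
  split; first by rewrite card_ord.
  move=> x y; case: (eqVneq x y) => [->|ne]; first exact: connect0.
  by apply: connect1; rewrite /e ne.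
split.
  split.
    exists id => f _ hc; apply/permP => x; rewrite perm1; exact: hc.
  move=> s hs; rewrite -[n.+2](card_ord n.+2).
  apply: (@lower_bound _ e _ id) => // i j ij.
  apply: tperm_aut; rewrite /e ?eqxx // ?(eq_sym j i) //.
  by move=> z zi zj; rewrite /e eq_sym zi eq_sym zj.
split.
  pose c := fun a : 'I_n.+2 + 'I_n.+2 => match a with inl i => i | inr i => i end.
  exists c => f hA hc.
  have key : forall a, f a = inl (c a) \/ f a = inr (c a).
    by move=> a; rewrite -hc; case: (f a) => /=; auto.
  have A1 : f (inr ord0) = inr ord0.
    case: (key (inr ord0)) => //= h; exfalso.
    have h1 := hA (inr ord0) (inr i1); rewrite h /= in h1.
    case: (key (inr i1)) => /= h2; rewrite h2 /= in h1 => //.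
    have h3 := hA (inr ord0) (inl i1); rewrite h /= in h3.
    case: (key (inl i1)) => /= h4; rewrite h4 /= in h3 => //.
    have E : f (inl i1) = f (inr i1) by rewrite h4 h2.
    by have := perm_inj E.
  have A2 : f (inl ord0) = inl ord0.
    case: (key (inl ord0)) => //= h; exfalso.
    by move: h; rewrite -A1 => /perm_inj.
  apply/permP => a; rewrite perm1.
  case: a => i; (case: (eqVneq i ord0) => [->|ne]; first by []).
  - have h1 := hA (inl i) (inl ord0); rewrite A2 /= in h1.
    case: (key (inl i)) => //= h; rewrite h /= in h1.
    by move: h1; rewrite /e /g ne eq_sym (negbTE ne).
  - have h1 := hA (inr i) (inl ord0); rewrite A2 /= in h1.
    case: (key (inr i)) => //= h; rewrite h /= in h1.
    by move: h1; rewrite /e /g ne eq_sym (negbTE ne).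
move=> s hs; rewrite -[n.+2](card_ord n.+2).
apply: (@lower_bound _ (functigraph e g) _ inl) => //; first by move=> x y [].
move=> i j ij; apply: tperm_aut.
- case=> z zi zj /=; last by [].
  move: zi zj; rewrite !(inj_eq (@inl_inj _ _)) => zi zj.
  by rewrite /e eq_sym zi eq_sym zj.
- by rewrite /= /e eq_sym.
- by rewrite /= /e !eqxx.
Qed.
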